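(* Let $0<T\le\infty$ and let $\varphi:[0,1]\times[0,T)\to\mathbb{R}$ be a smooth solution of $$\begin{cases}\varphi_t+r\varphi_r=\varphi_{rr}+\frac{\varphi_r}{r}-\frac{\sin(2\varphi)}{2r^2}, & 0<r<1,\\ \varphi(r,0)=\varphi_0(r), & 0<r<1,\\ \varphi(0,t)=0,\ \varphi(1,t)=\varphi_0(1), & t>0,\end{cases}$$ where $\varphi_0(0)=0$ and $-\pi\le\varphi_0(r)\le\pi$ for all $r\in[0,1]$. Then $-\pi<\varphi(r,t)<\pi$ for all $r\in(0,1)$ and $t\in(0,T)$. *)

(* Defs.v *)
From Stdlib Require Import Reals.
From Coquelicot Require Import Coquelicot.
Open Scope R_scope.

Definition in_dom (T : Rbar) (p : R * R) : Prop :=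
  0 <= fst p <= 1 /\ 0 <= snd p /\ Rbar_lt (snd p) T.

Definition in_int (T : Rbar) (r t : R) : Prop :=
  0 < r < 1 /\ 0 < t /\ Rbar_lt t T.

Definition cont_on_dom (T : Rbar) (phi : R -> R -> R) : Prop :=
  forall r t, in_dom T (r, t) ->
    filterlim (fun p : R * R => phi (fst p) (snd p))
              (within (in_dom T) (locally (r, t))) (locally (phi r t)).

Definition solves_pde (T : Rbar) (phi : R -> R -> R) : Prop :=
  exists phit phir phirr : R -> R -> R,
    forall r t, in_int T r t ->
      is_derive (fun s => phi r s) t (phit r t) /\
      is_derive (fun x => phi x t) r (phir r t) /\
      is_derive (fun x => phir x t) r (phirr r t) /\
      continuous (fun p : R * R => phit (fst p) (snd p)) (r, t) /\
      continuous (fun p : R * R => phir (fst p) (snd p)) (r, t) /\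
      continuous (fun p : R * R => phirr (fst p) (snd p)) (r, t) /\
      phit r t + r * phir r t
        = phirr r t + phir r t / r - sin (2 * phi r t) / (2 * r ^ 2).

Definition is_solution (T : Rbar) (phi0 : R -> R) (phi : R -> R -> R) : Prop :=
  cont_on_dom T phi /\
  solves_pde T phi /\
  (forall r, 0 < r < 1 -> phi r 0 = phi0 r) /\
  (forall t, 0 < t -> Rbar_lt t T -> phi 0 t = 0 /\ phi 1 t = phi0 1).

(* Main.v *)
Require Import Defs.
From Stdlib Require Import Reals Lra ClassicalEpsilon Classical.
From Coquelicot Require Import Coquelicot.
Open Scope R_scope.

Definition contR (f : R -> R -> R) a b c d :=
  forall x y, a <= x <= b -> c <= y <= d -> forall eps, 0 < eps ->
  exists del, 0 < del /\ forall x' y', a <= x' <= b -> c <= y' <= d ->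
    Rabs (x' - x) < del -> Rabs (y' - y) < del -> Rabs (f x' y' - f x y) < eps.

Lemma contR_sub f a b c d a' b' c' d' :
  contR f a b c d -> a <= a' -> b' <= b -> c <= c' -> d' <= d -> contR f a' b' c' d'.
Proof.
  intros H ha hb hc hd x y hx hy eps he.
  destruct (H x y ltac:(lra) ltac:(lra) eps he) as [del [hdel H']].
  exists del; split; auto. intros x' y' hx' hy'. apply H'; lra.
Qed.

Lemma contR_plus f g a b c d : contR f a b c d -> contR g a b c d ->
  contR (fun x y => f x y + g x y) a b c d.
Proof.
  intros Hf Hg x y hx hy eps he.
  destruct (Hf x y hx hy (eps/2) ltac:(lra)) as [d1 [h1 H1]].
  destruct (Hg x y hx hy (eps/2) ltac:(lra)) as [d2 [h2 H2]].
  exists (Rmin d1 d2); split. apply Rmin_pos; auto.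
  intros x' y' hx' hy' e1 e2.
  assert (A1 := H1 x' y' hx' hy' ltac:(pose proof (Rmin_l d1 d2); lra) ltac:(pose proof (Rmin_l d1 d2); lra)).
  assert (A2 := H2 x' y' hx' hy' ltac:(pose proof (Rmin_r d1 d2); lra) ltac:(pose proof (Rmin_r d1 d2); lra)).
  replace (f x' y' + g x' y' - (f x y + g x y)) with ((f x' y' - f x y) + (g x' y' - g x y)) by ring.
  eapply Rle_lt_trans. apply Rabs_triang. lra.
Qed.

Lemma contR_opp f a b c d : contR f a b c d -> contR (fun x y => - f x y) a b c d.
Proof.
  intros Hf x y hx hy eps he.
  destruct (Hf x y hx hy eps he) as [d1 [h1 H1]].
  exists d1; split; auto. intros. 
  replace (- f x' y' - - f x y) with (- (f x' y' - f x y)) by ring.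
  rewrite Rabs_Ropp. auto.
Qed.

Lemma contR_const k a b c d : contR (fun _ _ => k) a b c d.
Proof.
  intros x y hx hy eps he. exists 1; split; [lra|]. intros.
  replace (k - k) with 0 by ring. rewrite Rabs_R0. auto.
Qed.

Lemma ball_R (x y e : R) : ball x e y <-> Rabs (y - x) < e.
Proof. unfold ball; simpl; unfold AbsRing_ball, abs, minus, plus, opp; simpl. tauto. Qed.

Lemma contR_of_cont f a b c d :
  (forall x y, a <= x <= b -> c <= y <= d ->
     continuous (fun p : R * R => f (fst p) (snd p)) (x, y)) -> contR f a b c d.
Proof.
  intros H x y hx hy eps he.
  specialize (H x y hx hy).
  apply filterlim_locally with (eps := mkposreal eps he) in H.
  destruct H as [del Hd].
  exists del; split. apply cond_pos.
  intros x' y' _ _ e1 e2.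
  specialize (Hd (x', y')). simpl in Hd. apply ball_R. apply Hd.
  split; apply ball_R; auto.
Qed.

Lemma lt_T (T : Rbar) (y t0 : R) : y <= t0 -> Rbar_lt t0 T -> Rbar_lt y T.
Proof. intros h1 h2. apply (Rbar_le_lt_trans (Finite y) (Finite t0) T); auto. Qed.

Lemma contR_of_dom T phi (t0 : R) : cont_on_dom T phi -> Rbar_lt t0 T ->
  contR phi 0 1 0 t0.
Proof.
  intros H hT x y hx hy eps he.
  assert (hd : in_dom T (x, y)).
  { unfold in_dom, fst, snd. split; [lra|]. split; [lra|].
    apply (lt_T T y t0); auto; lra. }
  specialize (H x y hd).
  apply filterlim_locally with (eps := mkposreal eps he) in H.
  destruct H as [del Hd].
  exists del; split. apply cond_pos.
  intros x' y' hx' hy' e1 e2.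
  specialize (Hd (x', y')). simpl in Hd. apply ball_R. apply Hd.
  split; apply ball_R; auto.
  unfold in_dom, fst, snd. split; [lra|]. split; [lra|].
  apply (lt_T T y' t0); auto; lra.
Qed.

Lemma contR_uc f a b c d : contR f a b c d -> forall eps, 0 < eps ->
  exists del, 0 < del /\ forall x y x' y', a <= x <= b -> c <= y <= d ->
    a <= x' <= b -> c <= y' <= d ->
    Rabs (x' - x) < del -> Rabs (y' - y) < del -> Rabs (f x' y' - f x y) < eps.
Proof.
  intros H eps he.
  assert (Hex : forall u v : R, exists dl : posreal,
     a <= u <= b -> c <= v <= d ->
     forall x' y', a <= x' <= b -> c <= y' <= d ->
       Rabs (x' - u) < 2 * dl -> Rabs (y' - v) < 2 * dl -> Rabs (f x' y' - f u v) < eps / 2).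
  { intros u v.
    destruct (classic (a <= u <= b /\ c <= v <= d)) as [[hu hv]|hn].
    - destruct (H u v hu hv (eps/2) ltac:(lra)) as [dl [hdl Hd]].
      exists (mkposreal (dl/2) ltac:(lra)). intros _ _ x' y' hx hy e1 e2. simpl in e1, e2.
      apply Hd; auto; lra.
    - exists (mkposreal 1 Rlt_0_1). intros hu hv. exfalso; tauto. }
  set (delta := fun u v => proj1_sig (constructive_indefinite_description _ (Hex u v))).
  assert (Hdelta : forall u v, a <= u <= b -> c <= v <= d ->
     forall x' y', a <= x' <= b -> c <= y' <= d ->
       Rabs (x' - u) < 2 * delta u v -> Rabs (y' - v) < 2 * delta u v ->
       Rabs (f x' y' - f u v) < eps / 2).
  { intros u v. unfold delta. destruct (constructive_indefinite_description _ (Hex u v)) as [dl Hdl].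
    simpl. exact Hdl. }
  destruct (compactness_value_2d a b c d delta) as [d0 Hd0].
  exists d0; split. apply cond_pos.
  intros x y x' y' hx hy hx' hy' e1 e2.
  specialize (Hd0 x y hx hy).
  apply NNPP. intro Hneg. apply Hd0. intros [u [v [hu [hv [h1 [h2 h3]]]]]].
  apply Hneg.
  assert (pd := cond_pos (delta u v)).
  assert (A1 := Hdelta u v hu hv x y hx hy ltac:(lra) ltac:(lra)).
  assert (A2 := Hdelta u v hu hv x' y' hx' hy').
  assert (B1 : Rabs (x' - u) < 2 * delta u v).
  { replace (x' - u) with ((x' - x) + (x - u)) by ring.
    eapply Rle_lt_trans. apply Rabs_triang. lra. }
  assert (B2 : Rabs (y' - v) < 2 * delta u v).
  { replace (y' - v) with ((y' - y) + (y - v)) by ring.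
    eapply Rle_lt_trans. apply Rabs_triang. lra. }
  specialize (A2 B1 B2).
  replace (f x' y' - f x y) with ((f x' y' - f u v) - (f x y - f u v)) by ring.
  eapply Rle_lt_trans. apply Rabs_triang. rewrite Rabs_Ropp. lra.
Qed.

Definition clamp a b x := Rmax a (Rmin b x).

Lemma clamp_in a b x : a <= b -> a <= clamp a b x <= b.
Proof. intros. unfold clamp. split. apply Rmax_l. apply Rmax_lub; auto. apply Rmin_l. Qed.

Lemma clamp_id a b x : a <= x <= b -> clamp a b x = x.
Proof. intros. unfold clamp. rewrite Rmin_right by lra. rewrite Rmax_right; lra. Qed.

Lemma clamp_lip a b x y : a <= b -> Rabs (clamp a b x - clamp a b y) <= Rabs (x - y).
Proof.
  intros hab. unfold clamp.
  unfold Rmax, Rmin; repeat destruct Rle_dec; repeat (destruct Rle_dec); 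
  unfold Rabs; repeat destruct Rcase_abs; lra.
Qed.

Lemma cont_clamp (g : R -> R) a b : a <= b ->
  (forall x, a <= x <= b -> forall eps, 0 < eps -> exists del, 0 < del /\
     forall x', a <= x' <= b -> Rabs (x' - x) < del -> Rabs (g x' - g x) < eps) ->
  forall z, continuity_pt (fun x => g (clamp a b x)) z.
Proof.
  intros hab H z. unfold continuity_pt, continue_in, limit1_in, limit_in.
  intros eps he. destruct (H (clamp a b z) (clamp_in a b z hab) eps he) as [del [hd Hd]].
  exists del; split; auto. intros x [_ hx]. simpl in *. unfold R_dist in *.
  apply Hd. apply clamp_in; auto.
  eapply Rle_lt_trans. apply clamp_lip; auto. auto.
Qed.

Lemma max1 (g : R -> R) a b : a <= b ->
  (forall x, a <= x <= b -> forall eps, 0 < eps -> exists del, 0 < del /\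
     forall x', a <= x' <= b -> Rabs (x' - x) < del -> Rabs (g x' - g x) < eps) ->
  exists xm, a <= xm <= b /\ forall x, a <= x <= b -> g x <= g xm.
Proof.
  intros hab H.
  destruct (continuity_ab_maj (fun x => g (clamp a b x)) a b hab (fun c _ => cont_clamp g a b hab H c))
    as [xm [H1 H2]].
  exists xm; split; auto. intros x hx. specialize (H1 x hx). simpl in H1.
  rewrite !clamp_id in H1; auto.
Qed.

Lemma max2 f a b c d : contR f a b c d -> a <= b -> c <= d ->
  exists xm ym, a <= xm <= b /\ c <= ym <= d /\
    forall x y, a <= x <= b -> c <= y <= d -> f x y <= f xm ym.
Proof.
  intros H hab hcd.
  assert (Hs : forall y, exists xm, c <= y <= d -> a <= xm <= b /\ forall x, a <= x <= b -> f x y <= f xm y).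
  { intros y. destruct (classic (c <= y <= d)) as [hy|hn].
    - destruct (max1 (fun x => f x y) a b hab) as [xm Hx].
      + intros x hx eps he. destruct (H x y hx hy eps he) as [del [hd Hd]].
        exists del; split; auto. intros. apply Hd; auto. unfold Rminus; rewrite Rplus_opp_r, Rabs_R0; auto.
      + exists xm; auto.
    - exists a. intros; tauto. }
  set (X := fun y => proj1_sig (constructive_indefinite_description _ (Hs y))).
  assert (HX : forall y, c <= y <= d -> a <= X y <= b /\ forall x, a <= x <= b -> f x y <= f (X y) y).
  { intros y. unfold X. destruct (constructive_indefinite_description _ (Hs y)); simpl; auto. }
  destruct (max1 (fun y => f (X y) y) c d hcd) as [ym [hym Hym]].
  - intros y hy eps he. destruct (contR_uc f a b c d H (eps/2) ltac:(lra)) as [del [hd Hd]].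
    exists del; split; auto. intros y' hy' e.
    destruct (HX y hy) as [i1 m1]. destruct (HX y' hy') as [i2 m2].
    assert (E1 := Hd (X y) y (X y) y' i1 hy i1 hy' ltac:(unfold Rminus; rewrite Rplus_opp_r, Rabs_R0; auto) e).
    assert (e' : Rabs (y - y') < del) by (rewrite Rabs_minus_sym; auto).
    assert (E2 := Hd (X y') y' (X y') y i2 hy' i2 hy ltac:(unfold Rminus; rewrite Rplus_opp_r, Rabs_R0; auto) e').
    assert (m1' := m1 (X y') i2). assert (m2' := m2 (X y) i1).
    apply Rabs_def2 in E1. apply Rabs_def2 in E2.
    apply Rabs_def1; lra.
  - exists (X ym), ym. destruct (HX ym hym) as [i1 m1]. split; auto. split; auto.
    intros x y hx hy. destruct (HX y hy) as [i2 m2].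
    eapply Rle_trans. apply m2; auto. apply Hym; auto.
Qed.

Lemma persist f a b c d x y k : contR f a b c d -> a <= x <= b -> c <= y <= d -> k < f x y ->
  exists del, 0 < del /\ forall x' y', a <= x' <= b -> c <= y' <= d ->
    Rabs (x' - x) < del -> Rabs (y' - y) < del -> k < f x' y'.
Proof.
  intros H hx hy hk. destruct (H x y hx hy (f x y - k) ltac:(lra)) as [del [hd Hd]].
  exists del; split; auto. intros. specialize (Hd x' y' H0 H1 H2 H3).
  apply Rabs_def2 in Hd. lra.
Qed.

Lemma der_left_max f x l eta : is_derive f x l -> 0 < eta ->
  (forall y, x - eta < y < x -> f y <= f x) -> 0 <= l.
Proof.
  intros Hd he Hm. apply is_derive_Reals in Hd.
  destruct (Rle_or_lt 0 l) as [h|h]; auto. exfalso.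
  destruct (Hd (-l) ltac:(lra)) as [del Hdel].
  assert (pd := cond_pos del). assert (m1 := Rmin_l del eta). assert (m2 := Rmin_r del eta).
  assert (pm : 0 < Rmin del eta) by (apply Rmin_pos; auto).
  set (h0 := - (Rmin del eta / 2)).
  assert (hh : h0 <> 0) by (unfold h0; lra).
  assert (ha : Rabs h0 < del) by (unfold h0; rewrite Rabs_left; lra).
  specialize (Hdel h0 hh ha). apply Rabs_def2 in Hdel.
  assert (Hy := Hm (x + h0) ltac:(unfold h0; lra)).
  set (q := (f (x + h0) - f x) / h0) in *.
  assert (E : q * h0 = f (x + h0) - f x) by (unfold q; field; auto).
  assert (h0 < 0) by (unfold h0; lra).
  nra.
Qed.

Lemma der_right_max f x l eta : is_derive f x l -> 0 < eta ->
  (forall y, x < y < x + eta -> f y <= f x) -> l <= 0.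
Proof.
  intros Hd he Hm. apply is_derive_Reals in Hd.
  destruct (Rle_or_lt l 0) as [h|h]; auto. exfalso.
  destruct (Hd l ltac:(lra)) as [del Hdel].
  assert (pd := cond_pos del). assert (m1 := Rmin_l del eta). assert (m2 := Rmin_r del eta).
  assert (pm : 0 < Rmin del eta) by (apply Rmin_pos; auto).
  set (h0 := Rmin del eta / 2).
  assert (hh : h0 <> 0) by (unfold h0; lra).
  assert (ha : Rabs h0 < del) by (unfold h0; rewrite Rabs_right; lra).
  specialize (Hdel h0 hh ha). apply Rabs_def2 in Hdel.
  assert (Hy := Hm (x + h0) ltac:(unfold h0; lra)).
  set (q := (f (x + h0) - f x) / h0) in *.
  assert (E : q * h0 = f (x + h0) - f x) by (unfold q; field; auto).
  assert (0 < h0) by (unfold h0; lra).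
  nra.
Qed.

Lemma der_max_zero f x l eta : is_derive f x l -> 0 < eta ->
  (forall y, x - eta < y < x + eta -> f y <= f x) -> l = 0.
Proof.
  intros Hd he Hm.
  assert (0 <= l) by (apply (der_left_max f x l eta); auto; intros; apply Hm; lra).
  assert (l <= 0) by (apply (der_right_max f x l eta); auto; intros; apply Hm; lra).
  lra.
Qed.

Lemma der2_max f f' x l eta : 0 < eta ->
  (forall y, x - eta < y < x + eta -> is_derive f y (f' y)) ->
  f' x = 0 -> is_derive f' x l ->
  (forall y, x - eta < y < x + eta -> f y <= f x) -> l <= 0.
Proof.
  intros he Hd1 h0 Hd2 Hm.
  destruct (Rle_or_lt l 0) as [h|h]; auto. exfalso.
  apply is_derive_Reals in Hd2.
  destruct (Hd2 (l/2) ltac:(lra)) as [del Hdel].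
  assert (pd := cond_pos del).
  assert (Hpos : forall z, x <= z -> z < x + Rmin del eta -> (l/2) * (z - x) <= f' z).
  { intros z hz1 hz2. destruct (Req_dec z x) as [e|ne].
    - subst. rewrite h0. lra.
    - assert (m1 := Rmin_l del eta).
      specialize (Hdel (z - x) ltac:(lra) ltac:(rewrite Rabs_right; lra)).
      replace (x + (z - x)) with z in Hdel by ring. rewrite h0 in Hdel.
      apply Rabs_def2 in Hdel.
      set (q := (f' z - 0) / (z - x)) in *.
      assert (E : q * (z - x) = f' z) by (unfold q; field; lra).
      nra. }
  assert (pm : 0 < Rmin del eta) by (apply Rmin_pos; auto).
  set (hh := Rmin del eta / 2).
  set (g := fun y => f y - (l/4) * ((y - x) * (y - x))).
  assert (Hg : forall y, x - eta < y < x + eta -> is_derive g y (f' y - (l/2) * (y - x))).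
  { intros y hy. unfold g.
    assert (D : is_derive (fun y => l/4*((y-x)*(y-x))) y (l/2*(y-x))).
    { auto_derive; [auto| field]. }
    exact (is_derive_minus _ _ _ _ _ (Hd1 y hy) D). }
  assert (m2 := Rmin_r del eta).
  destruct (MVT_gen g x (x + hh) (fun y => f' y - (l/2) * (y - x))) as [c [hc hc2]].
  - intros y hy. rewrite Rmin_left in hy by (unfold hh; lra). rewrite Rmax_right in hy by (unfold hh; lra).
    apply Hg. unfold hh in *; lra.
  - intros y hy. rewrite Rmin_left in hy by (unfold hh; lra). rewrite Rmax_right in hy by (unfold hh; lra).
    apply continuity_pt_filterlim. apply (ex_derive_continuous (K:=R_AbsRing) (V:=R_NormedModule) g). eexists. apply Hg. unfold hh in *; lra.
  - rewrite Rmin_left in hc by (unfold hh; lra). rewrite Rmax_right in hc by (unfold hh; lra).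
    assert (P := Hpos c ltac:(lra) ltac:(unfold hh in *; lra)).
    assert (Hx := Hm (x + hh) ltac:(unfold hh in *; lra)).
    unfold g in hc2.
    assert (0 <= (f' c - l / 2 * (c - x)) * (x + hh - x)) by (apply Rmult_le_pos; unfold hh in *; lra).
    assert (0 < hh) by (unfold hh; lra).
    replace (x - x) with 0 in hc2 by ring.
    assert (0 < l / 4 * ((x + hh - x) * (x + hh - x))).
    { apply Rmult_lt_0_compat. lra. replace (x + hh - x) with hh by ring. nra. }
    lra.
Qed.

Lemma Rabs0 x : Rabs (x - x) = 0.
Proof. unfold Rminus; rewrite Rplus_opp_r, Rabs_R0; auto. Qed.

Lemma sin_pos_2M M : PI < M -> M < PI + PI/4 -> 0 < sin (2 * M).
Proof.
  intros h1 h2. replace (2 * M) with ((2 * M - 2 * PI) + PI + PI) by ring.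
  rewrite neg_sin, neg_sin, Ropp_involutive. apply sin_gt_0; lra.
Qed.

Lemma sin_lb_p p : p <= PI -> - (2 * (PI - p)) <= sin (2 * p).
Proof.
  intros h. set (y := 2 * PI - 2 * p).
  replace (2 * p) with (- y + PI + PI) by (unfold y; ring).
  rewrite neg_sin, neg_sin, Ropp_involutive, sin_neg.
  destruct (Req_dec y 0) as [e|ne].
  - rewrite e, sin_0. unfold y in e. lra.
  - assert (sin y < y) by (apply sin_lt_x; unfold y in *; lra). unfold y in *; lra.
Qed.

Lemma weak_upper T phi0 phi : is_solution T phi0 phi ->
  (forall r, 0 <= r <= 1 -> phi0 r <= PI) ->
  forall t0 : R, 0 < t0 -> Rbar_lt t0 T ->
  (forall x c, 0 <= x <= 1 -> (forall t, 0 < t <= t0 -> phi x t = c) -> phi x 0 <= c) /\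
  (forall r t, 0 <= r <= 1 -> 0 <= t <= t0 -> phi r t <= PI).
Proof.
  intros [hc [[phit [phir [phirr hpde]]] [hinit hbd]]] hb t0 ht0 hT0.
  assert (HK := contR_of_dom T phi t0 hc hT0).
  assert (V0 : forall x c, 0 <= x <= 1 -> (forall t, 0 < t <= t0 -> phi x t = c) -> phi x 0 <= c).
  { intros x c hx Hc. destruct (Rle_or_lt (phi x 0) c) as [h|h]; auto. exfalso.
    destruct (persist phi 0 1 0 t0 x 0 c HK hx ltac:(lra) h) as [del [hd Hd]].
    assert (m:= Rmin_l (del/2) t0). assert (m':= Rmin_r (del/2) t0). set (t' := Rmin (del/2) t0) in *.
    assert (0 < t') by (apply Rmin_pos; lra).
    specialize (Hd x t' hx ltac:(lra) ltac:(rewrite Rabs0; lra) ltac:(rewrite Rminus_0_r, Rabs_right; lra)).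
    rewrite (Hc t') in Hd; lra. }
  split; [exact V0|].
  assert (bd : forall t, 0 < t <= t0 -> phi 0 t = 0 /\ phi 1 t = phi0 1).
  { intros t ht. apply hbd. lra. apply (lt_T T t t0); auto; lra. }
  assert (B0 : forall r, 0 <= r <= 1 -> phi r 0 <= PI).
  { intros r hr. assert (pi := PI_RGT_0).
    destruct (Req_dec r 0) as [e|n0]. subst. assert (phi 0 0 <= 0). apply V0. lra. intros; apply bd; auto. lra.
    destruct (Req_dec r 1) as [e|n1]. subst. assert (phi 1 0 <= phi0 1). apply V0. lra. intros; apply bd; auto.
    assert (phi0 1 <= PI) by (apply hb; lra). lra.
    rewrite hinit by lra. apply hb; lra. }
  set (E := fun s => 0 <= s <= t0 /\ forall r t, 0 <= r <= 1 -> 0 <= t <= s -> phi r t <= PI).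
  assert (hE0 : E 0). { split. lra. intros r t hr ht. replace t with 0 by lra. auto. }
  assert (hbE : bound E). { exists t0. intros x [hx _]. lra. }
  destruct (completeness E hbE (ex_intro _ 0 hE0)) as [tau [Hub Hlub]].
  assert (tau0 : 0 <= tau) by (apply Hub; auto).
  assert (taut0 : tau <= t0) by (apply Hlub; intros x [hx _]; lra).
  assert (approx : forall t, t < tau -> exists s, E s /\ t < s).
  { intros t ht. apply NNPP. intro hn. assert (tau <= t). apply Hlub. intros x hx.
    destruct (Rle_or_lt x t); auto. exfalso; apply hn; exists x; auto. lra. }
  assert (Elt : forall r t, 0 <= r <= 1 -> 0 <= t < tau -> phi r t <= PI).
  { intros r t hr ht. destruct (approx t ltac:(lra)) as [s [[_ Hs] hs]]. apply Hs; lra. }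
  assert (Etau : forall r t, 0 <= r <= 1 -> 0 <= t <= tau -> phi r t <= PI).
  { intros r t hr ht. destruct (Rlt_or_le t tau) as [h|h]. apply Elt; lra.
    destruct (Req_dec t 0) as [e|ne]. subst; auto.
    destruct (Rle_or_lt (phi r t) PI) as [h'|h']; auto. exfalso.
    destruct (persist phi 0 1 0 t0 r t PI HK hr ltac:(lra) h') as [del [hd Hd]].
    set (t' := t - Rmin del t / 2). assert (m:= Rmin_l del t). assert (m':= Rmin_r del t).
    assert (0 < Rmin del t) by (apply Rmin_pos; lra).
    specialize (Hd r t' hr ltac:(unfold t'; lra) ltac:(rewrite Rabs0; lra)
       ltac:(unfold t'; rewrite Rabs_left; lra)).
    assert (phi r t' <= PI) by (apply Elt; unfold t'; lra). lra. }
  destruct (Rlt_or_le tau t0) as [hlt|hge].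
  2:{ intros r t hr ht. apply Etau; lra. }
  exfalso.
  destruct (contR_uc phi 0 1 0 t0 HK (PI/4) ltac:(assert (pi := PI_RGT_0); lra)) as [del [hd Hd]].
  assert (s1 := Rmin_l t0 (tau + del/2)). assert (s2 := Rmin_r t0 (tau + del/2)).
  assert (stau : tau < Rmin t0 (tau + del/2)) by (apply Rmin_glb_lt; lra).
  set (s := Rmin t0 (tau + del/2)) in *.
  assert (bound5 : forall r t, 0 <= r <= 1 -> 0 <= t <= s -> phi r t < PI + PI/4).
  { intros r t hr ht. destruct (Rle_or_lt t tau) as [h|h].
    - assert (phi r t <= PI) by (apply Etau; lra). assert (pi := PI_RGT_0). lra.
    - assert (Hx := Hd r tau r t hr ltac:(lra) hr ltac:(lra) ltac:(rewrite Rabs0; lra)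
          ltac:(rewrite Rabs_right; lra)).
      apply Rabs_def2 in Hx. assert (phi r tau <= PI) by (apply Etau; lra). lra. }
  destruct (max2 phi 0 1 0 s (contR_sub phi 0 1 0 t0 0 1 0 s HK ltac:(lra) ltac:(lra) ltac:(lra) ltac:(lra)) ltac:(lra) ltac:(lra))
    as [rm [tm [hrm [htm Hmax]]]].
  destruct (Rle_or_lt (phi rm tm) PI) as [hM|hM].
  { assert (E s). { split. lra. intros r t hr ht. eapply Rle_trans. apply Hmax; lra. auto. }
    assert (s <= tau) by (apply Hub; auto). lra. }
  assert (tmtau : tau < tm).
  { destruct (Rle_or_lt tm tau) as [h|h]; auto. assert (phi rm tm <= PI) by (apply Etau; lra). lra. }
  assert (pi := PI_RGT_0).
  assert (rm0 : rm <> 0). { intro e; subst. rewrite (proj1 (bd tm ltac:(lra))) in hM. lra. }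
  assert (rm1 : rm <> 1). { intro e; subst. rewrite (proj2 (bd tm ltac:(lra))) in hM.
    assert (phi0 1 <= PI) by (apply hb; lra). lra. }
  assert (hint : forall y, 0 < y < 1 -> Defs.in_int T y tm).
  { intros y hy. split; auto. split. lra. apply (lt_T T tm t0); auto; lra. }
  destruct (hpde rm tm (hint rm ltac:(lra))) as [dt [dr [drr [_ [_ [_ eq]]]]]].
  assert (e1 := Rmin_l rm (1 - rm)). assert (e2 := Rmin_r rm (1 - rm)).
  assert (he : 0 < Rmin rm (1 - rm)) by (apply Rmin_pos; lra).
  set (eta := Rmin rm (1 - rm)) in *.
  assert (Ht : 0 <= phit rm tm).
  { apply (der_left_max (fun s => phi rm s) tm _ tm dt ltac:(lra)).
    intros y hy. apply Hmax; lra. }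
  assert (Hr : phir rm tm = 0).
  { apply (der_max_zero (fun x => phi x tm) rm _ eta dr he).
    intros y hy. apply Hmax; unfold eta in *; lra. }
  assert (Hrr : phirr rm tm <= 0).
  { apply (der2_max (fun x => phi x tm) (fun x => phir x tm) rm _ eta he); auto.
    intros y hy. apply (hpde y tm (hint y ltac:(unfold eta in *; lra))).
    intros y hy. apply Hmax; unfold eta in *; lra. }
  assert (Hs := sin_pos_2M (phi rm tm) hM ltac:(apply bound5; lra)).
  assert (0 < sin (2 * phi rm tm) / (2 * rm ^ 2)).
  { apply Rdiv_lt_0_compat; auto. assert (0 < rm) by lra. nra. }
  rewrite Hr in eq. replace (0 / rm) with 0 in eq by (field; lra). lra.
Qed.

Lemma contR_w (ep al s a : R) a1 b1 c1 d1 : 0 < ep -> 0 < al -> 0 < s ->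
  contR (fun r t => ep * (exp (al * (s * t - r + a)) - 1)) a1 b1 c1 d1.
Proof.
  intros hep hal hs x y hx hy eps he.
  set (A := al * (s * y - x + a)).
  assert (Hc := derivable_continuous_pt exp A (derivable_pt_exp A)).
  unfold continuity_pt, continue_in, limit1_in, limit_in in Hc.
  destruct (Hc (eps / ep) ltac:(apply Rdiv_lt_0_compat; auto)) as [de [hde Hde]].
  exists (de / (al * (s + 1))). split. apply Rdiv_lt_0_compat; auto. nra.
  intros x' y' _ _ e1 e2.
  set (A' := al * (s * y' - x' + a)).
  assert (HA : Rabs (A' - A) < de).
  { unfold A, A'. replace (al * (s * y' - x' + a) - al * (s * y - x + a)) with (al * (s * (y' - y) - (x' - x))) by ring.
    rewrite Rabs_mult, Rabs_right by lra.
    assert (Rabs (s * (y' - y) - (x' - x)) <= s * Rabs (y' - y) + Rabs (x' - x)).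
    { unfold Rminus at 1. eapply Rle_trans. apply Rabs_triang. rewrite Rabs_Ropp, Rabs_mult, (Rabs_right s) by lra. lra. }
    assert (al * (s + 1) > 0) by nra.
    assert (e1' : Rabs (x' - x) * (al * (s + 1)) < de).
    { apply (Rmult_lt_compat_r (al * (s+1))) in e1; auto. unfold Rdiv in e1. rewrite Rmult_assoc, Rinv_l in e1 by lra. lra. }
    assert (e2' : Rabs (y' - y) * (al * (s + 1)) < de).
    { apply (Rmult_lt_compat_r (al * (s+1))) in e2; auto. unfold Rdiv in e2. rewrite Rmult_assoc, Rinv_l in e2 by lra. lra. }
    assert (0 <= Rabs (x' - x)) by apply Rabs_pos. assert (0 <= Rabs (y' - y)) by apply Rabs_pos.
    nra. }
  fold A. fold A'.
  replace (ep * (exp A' - 1) - ep * (exp A - 1)) with (ep * (exp A' - exp A)) by ring.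
  rewrite Rabs_mult, (Rabs_right ep) by lra.
  destruct (Req_dec A' A) as [e|ne].
  - rewrite e, Rabs0. lra.
  - assert (H := Hde A' (conj (conj I (not_eq_sym ne)) HA)).
    unfold R_dist in H. 
    apply (Rmult_lt_compat_l ep) in H; auto. unfold Rdiv in H. 
    replace (ep * (eps * / ep)) with eps in H by (field; lra). exact H.
Qed.

Lemma exp_le1 x : x <= 0 -> exp x <= 1.
Proof. intros h. rewrite <- exp_0. destruct (Req_dec x 0) as [e|n]. subst; lra.
  apply Rlt_le, exp_increasing. lra. Qed.

Lemma strict_upper T phi0 phi : is_solution T phi0 phi ->
  (forall r, 0 <= r <= 1 -> phi0 r <= PI) ->
  forall r0 t0, 0 < r0 < 1 -> 0 < t0 -> Rbar_lt t0 T -> phi r0 t0 < PI.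
Proof.
  intros hsol hb r0 t0 hr0 ht0 hT0.
  destruct (weak_upper T phi0 phi hsol hb t0 ht0 hT0) as [V0 W].
  destruct hsol as [hc [[phit [phir [phirr hpde]]] [hinit hbd]]].
  assert (HK := contR_of_dom T phi t0 hc hT0).
  assert (pi := PI_RGT_0). assert (pi3 := PI2_3_2).
  assert (bd : forall t, 0 < t <= t0 -> phi 0 t = 0 /\ phi 1 t = phi0 1).
  { intros t ht. apply hbd. lra. apply (lt_T T t t0); auto; lra. }
  destruct (contR_uc phi 0 1 0 t0 HK 1 Rlt_0_1) as [del1 [hd1 Hd1]].
  assert (m1 := Rmin_l (del1/2) (r0/2)). assert (m2 := Rmin_r (del1/2) (r0/2)).
  assert (ha : 0 < Rmin (del1/2) (r0/2)) by (apply Rmin_pos; lra).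
  set (a := Rmin (del1/2) (r0/2)) in *.
  assert (Ha : forall t, 0 <= t <= t0 -> phi a t <= 1).
  { intros t ht. assert (phi 0 t <= 0).
    { destruct (Req_dec t 0) as [e|n]. subst. apply V0. lra. intros; apply bd; auto.
      rewrite (proj1 (bd t ltac:(lra))). lra. }
    assert (HH := Hd1 0 t a t ltac:(lra) ht ltac:(lra) ht ltac:(rewrite Rminus_0_r, Rabs_right; lra) ltac:(rewrite Rabs0; lra)).
    apply Rabs_def2 in HH. lra. }
  set (s := (1 - a) / t0).
  assert (hs : 0 < s) by (unfold s; apply Rdiv_lt_0_compat; lra).
  assert (st0 : s * t0 = 1 - a) by (unfold s; field; lra).
  set (al := s + / a + / a * / a + 1).
  assert (hia : 0 < / a) by (apply Rinv_0_lt_compat; auto).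
  assert (hal : 1 <= al) by (unfold al; nra).
  set (ep := exp (- (al * (1 - a)))).
  assert (hep : 0 < ep) by apply exp_pos.
  assert (epE : ep * exp (al * (1 - a)) = 1).
  { unfold ep. rewrite <- exp_plus. replace (- (al * (1 - a)) + al * (1 - a)) with 0 by ring. apply exp_0. }
  set (w := fun r t => ep * (exp (al * (s * t - r + a)) - 1)).
  assert (Hw : contR w a 1 0 t0) by (apply contR_w; lra).
  set (f := fun r t => phi r t + w r t).
  assert (Hf : contR f a 1 0 t0).
  { apply contR_plus; auto. apply (contR_sub phi 0 1 0 t0); auto; lra. }
  destruct (max2 f a 1 0 t0 Hf ltac:(lra) ltac:(lra)) as [rm [tm [hrm [htm Hmax]]]].
  assert (w0 : forall r, a <= r -> w r 0 <= 0).
  { intros r hr. unfold w. assert (exp (al * (s * 0 - r + a)) <= 1) by (apply exp_le1; nra). nra. }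
  assert (w1 : forall t, 0 <= t <= t0 -> w 1 t <= 0).
  { intros t ht. unfold w. assert (s * t <= s * t0) by (apply Rmult_le_compat_l; lra).
    assert (exp (al * (s * t - 1 + a)) <= 1).
    { apply exp_le1. assert (s * t - 1 + a <= 0) by lra. assert (0 <= al) by lra.
      rewrite <- (Rmult_0_r al). apply Rmult_le_compat_l; lra. }
    nra. }
  assert (wa : forall t, 0 <= t <= t0 -> w a t < 1).
  { intros t ht. unfold w. replace (s * t - a + a) with (s * t) by ring.
    assert (exp (al * (s * t)) <= exp (al * (1 - a))).
    { destruct (Req_dec t t0) as [e|n]. subst. rewrite st0. lra. apply Rlt_le, exp_increasing.
      rewrite <- st0. apply Rmult_lt_compat_l. lra. apply Rmult_lt_compat_l; lra. }
    nra. }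
  assert (wpos : 0 < w r0 t0).
  { unfold w. rewrite st0. replace (1 - a - r0 + a) with (1 - r0) by ring.
    assert (1 < exp (al * (1 - r0))). { rewrite <- exp_0 at 1. apply exp_increasing. apply Rmult_lt_0_compat; lra. }
    apply Rmult_lt_0_compat; lra. }
  assert (Hf0 : f r0 t0 <= f rm tm) by (apply Hmax; lra).
  destruct (Rle_or_lt (f rm tm) PI) as [hM|hM].
  { unfold f in Hf0, hM. lra. }
  exfalso.
  assert (tm0 : tm <> 0).
  { intro e; subst. assert (phi rm 0 <= PI) by (apply W; lra). assert (w rm 0 <= 0) by (apply w0; lra).
    unfold f in hM. lra. }
  assert (rma : rm <> a).
  { intro e; subst. assert (phi a tm <= 1) by (apply Ha; lra). assert (w a tm < 1) by (apply wa; lra).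
    unfold f in hM. lra. }
  assert (rm1 : rm <> 1).
  { intro e; subst. assert (w 1 tm <= 0) by (apply w1; lra). unfold f in hM. rewrite (proj2 (bd tm ltac:(lra))) in hM.
    assert (phi0 1 <= PI) by (apply hb; lra). unfold f in hM. lra. }
  assert (hint : forall y, 0 < y < 1 -> Defs.in_int T y tm).
  { intros y hy. split; auto. split. lra. apply (lt_T T tm t0); auto; lra. }
  destruct (hpde rm tm (hint rm ltac:(lra))) as [dt [dr [drr [_ [_ [_ eq]]]]]].
  set (E := exp (al * (s * tm - rm + a))).
  assert (hE : 0 < E) by apply exp_pos.
  assert (dwt : is_derive (fun t => w rm t) tm (ep * (al * s * E))).
  { unfold w, E. auto_derive; auto. unfold Rminus; ring. }
  assert (dwr : forall y, is_derive (fun x => w x tm) y (- (ep * al * exp (al * (s * tm - y + a))))).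
  { intros y. unfold w. auto_derive; auto. unfold Rminus; ring. }
  assert (dwrr : is_derive (fun x => - (ep * al * exp (al * (s * tm - x + a)))) rm (ep * al * al * E)).
  { unfold E. auto_derive; auto. unfold Rminus; ring. }
  assert (e1 := Rmin_l (rm - a) (1 - rm)). assert (e2 := Rmin_r (rm - a) (1 - rm)).
  assert (he : 0 < Rmin (rm - a) (1 - rm)) by (apply Rmin_pos; lra).
  set (eta := Rmin (rm - a) (1 - rm)) in *.
  assert (Ht : 0 <= phit rm tm + ep * (al * s * E)).
  { apply (der_left_max (fun t => phi rm t + w rm t) tm _ tm).
    apply (is_derive_plus (fun t => phi rm t) (fun t => w rm t)); auto. lra.
    intros y hy. apply (Hmax rm y); lra. }
  assert (Hr : phir rm tm + - (ep * al * E) = 0).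
  { apply (der_max_zero (fun x => phi x tm + w x tm) rm _ eta).
    - apply (is_derive_plus (fun x => phi x tm) (fun x => w x tm)). exact dr. apply dwr.
    - exact he.
    - intros y hy. apply (Hmax y tm); unfold eta in *; lra. }
  assert (Hrr : phirr rm tm + ep * al * al * E <= 0).
  { apply (der2_max (fun x => phi x tm + w x tm)
      (fun x => phir x tm + - (ep * al * exp (al * (s * tm - x + a)))) rm _ eta he).
    - intros y hy. apply (is_derive_plus (fun x => phi x tm) (fun x => w x tm)).
      apply (hpde y tm (hint y ltac:(unfold eta in *; lra))). apply dwr.
    - exact Hr.
    - apply (is_derive_plus (fun x => phir x tm) (fun x => - (ep * al * exp (al * (s * tm - x + a))))); auto.
    - intros y hy. apply (Hmax y tm); unfold eta in *; lra. }
  set (p := phi rm tm) in *.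
  assert (hp : p <= PI) by (apply W; lra).
  assert (Hsin := sin_lb_p p hp).
  assert (hfm : PI - p < ep * E) by (unfold f, w in hM; fold E in hM; unfold p in *; lra).
  set (K := ep * E).
  assert (hK : 0 < K) by (unfold K; nra).
  set (q := / rm).
  assert (hrm0 : 0 < rm) by lra.
  assert (hq : 0 < q) by (unfold q; apply Rinv_0_lt_compat; lra).
  assert (hqa : q <= / a) by (unfold q; apply Rinv_le_contravar; lra).
  assert (E1 : phir rm tm / rm = phir rm tm * q) by (unfold q; field; lra).
  assert (E2 : sin (2 * p) / (2 * rm ^ 2) = sin (2 * p) * (q * q) / 2) by (unfold q; field; lra).
  rewrite E1, E2 in eq.
  assert (Hphr : phir rm tm = al * K) by (unfold K; lra).
  assert (Hpt : - (al * s * K) <= phit rm tm) by (unfold K; nra).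
  assert (Hprr : phirr rm tm <= - (al * al * K)) by (unfold K; nra).
  assert (hqq : 0 < q * q) by nra.
  assert (S1 : - (sin (2 * p) * (q * q) / 2) <= (PI - p) * (q * q)).
  { assert (- (sin (2 * p)) * (q * q) <= (2 * (PI - p)) * (q * q)) by (apply Rmult_le_compat_r; lra). lra. }
  assert (S2 : (PI - p) * (q * q) < K * (q * q)) by (apply Rmult_lt_compat_r; auto).
  rewrite Hphr in eq.
  assert (0 <= rm * (al * K)) by (apply Rmult_le_pos; [lra| apply Rmult_le_pos; lra]).
  assert (Ineq : - (al * s * K) < - (al * al * K) + al * K * q + K * (q * q)) by lra.
  assert (Ineq2 : al * al < al * s + al * q + q * q).
  { apply (Rmult_lt_reg_r K); auto. nra. }
  assert (al >= s + q + q * q + 1) by (unfold al; nra).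
  nra.
Qed.

Lemma neg_sol T phi0 phi : is_solution T phi0 phi ->
  is_solution T (fun r => - phi0 r) (fun r t => - phi r t).
Proof.
  intros [hc [[phit [phir [phirr hpde]]] [hinit hbd]]].
  split; [|split; [|split]].
  - intros r t hd. eapply filterlim_comp. exact (hc r t hd).
    apply (filterlim_opp (V := R_NormedModule)).
  - exists (fun r t => - phit r t), (fun r t => - phir r t), (fun r t => - phirr r t).
    intros r t hi. destruct (hpde r t hi) as [d1 [d2 [d3 [c1 [c2 [c3 eq]]]]]].
    assert (hr : 0 < r) by (destruct hi as [[h _] _]; exact h).
    split; [|split; [|split; [|split; [|split; [|split]]]]].
    + apply (is_derive_opp (fun s => phi r s)); auto.
    + apply (is_derive_opp (fun x => phi x t)); auto.
    + apply (is_derive_opp (fun x => phir x t)); auto.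
    + apply (continuous_opp (V := R_NormedModule) (fun p : R * R => phit (fst p) (snd p))); auto.
    + apply (continuous_opp (V := R_NormedModule) (fun p : R * R => phir (fst p) (snd p))); auto.
    + apply (continuous_opp (V := R_NormedModule) (fun p : R * R => phirr (fst p) (snd p))); auto.
    + replace (2 * - phi r t) with (- (2 * phi r t)) by ring. rewrite sin_neg.
      replace (- phir r t / r) with (- (phir r t / r)) by (field; lra).
      replace (- - sin (2 * phi r t) / (2 * r ^ 2)) with (sin (2 * phi r t) / (2 * r ^ 2)) by (field; lra).
      lra.
  - intros r hr. rewrite hinit; auto.
  - intros t h1 h2. destruct (hbd t h1 h2) as [e1 e2]. rewrite e1, e2. split; ring.
Qed.

Theorem lemma4p1 (T : Rbar) (phi0 : R -> R) (phi : R -> R -> R)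
  (hT : Rbar_lt 0 T)
  (h00 : phi0 0 = 0)
  (hbd : forall r, 0 <= r <= 1 -> - PI <= phi0 r <= PI)
  (hsol : is_solution T phi0 phi) :
  forall r t, 0 < r < 1 -> 0 < t -> Rbar_lt t T -> - PI < phi r t < PI.
Proof.
  intros r t hr ht hT'. split.
  - assert (H := strict_upper T (fun r => - phi0 r) (fun r t => - phi r t) (neg_sol T phi0 phi hsol)
      (fun r hr => ltac:(assert (hh := hbd r hr); lra)) r t hr ht hT').
    simpl in H. lra.
  - exact (strict_upper T phi0 phi hsol (fun r hr => proj2 (hbd r hr)) r t hr ht hT').
Qed.
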